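(* (i) Let $H_0 \subset \mathbb{S}^n$ be a hemisphere. Any family $(H_i)_{i \in I}$ of hemispheres such that the sets $H_0 \cap H_i$, $i\in I$, are non-empty and pairwise disjoint has cardinality at most $2$. (ii) Let $\min(p,q)\ge 2$ and let $M_0 \subset \widetilde{\mathrm{Ein}}^{p,q}$ be a Minkowski patch. Any family $(M_i)_{i\in I}$ of Minkowski patches such that the sets $M_0 \cap M_i$, $i \in I$, are non-empty and pairwise disjoint has cardinality at most $2$.
   Context: A hemisphere of $\mathbb{S}^n\subset\mathbb{R}^{n+1}$ is $\mathbb{S}^n\cap\{\ell>0\}$ for a nonzero linear form $\ell$. $\widetilde{\mathrm{Ein}}^{p,q}\cong\mathbb{S}^p\times\mathbb{S}^q$ is the set of isotropic vectors of Euclidean norm 1 of $\mathbb{R}^{p+1,q+1}$, double covering $\mathrm{Ein}^{p,q}$ (isotropic lines) via $\pi_{\mathbf{X}}$. A Minkowski patch of $\widetilde{\mathrm{Ein}}^{p,q}$ is a connected component of $\pi_{\mathbf{X}}^{-1}(M_x)$ with $M_x=\{[w]:B(v,w)\ne 0\}$ for an isotropic $v$, $x=[v]$. *)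

(* Defs.v *)
(* classical reals.  Vectors of R^(N+1) are functions
   nat -> R supported on indices 0..N. Sets are predicates. *)
From Stdlib Require Import Reals.
Open Scope R_scope.

Definition vecR := nat -> R.
Definition pset := vecR -> Prop.

Definition supp (N : nat) (x : vecR) : Prop := forall i, (N < i)%nat -> x i = 0.

Definition dot (N : nat) (x y : vecR) : R := sum_f_R0 (fun i => x i * y i) N.

Definition vsub (x y : vecR) : vecR := fun i => x i - y i.

Definition nonzero (N : nat) (x : vecR) : Prop := exists i, (i <= N)%nat /\ x i <> 0.

Definition sphere (n : nat) : pset := fun x => supp n x /\ dot n x x = 1.

(* H is S^n ∩ {l > 0} for a nonzero linear form l (written l = <lv, .>) *)
Definition hemisphere (n : nat) (H : pset) : Prop :=
  exists lv : vecR, supp n lv /\ nonzero n lv /\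
    forall x, H x <-> (sphere n x /\ dot n lv x > 0).

(* ---------- Part (ii): R^{p+1,q+1}, coordinates 0..p positive,
   p+1..p+q+1 negative (total p+q+2 coordinates) ---------- *)
Definition Bform (p q : nat) (v w : vecR) : R :=
  sum_f_R0 (fun i => v i * w i) p
  - sum_f_R0 (fun i => v (S p + i)%nat * w (S p + i)%nat) q.

Definition Ein_tilde (p q : nat) : pset :=
  fun w => supp (p + q + 1) w /\ Bform p q w w = 0 /\ dot (p + q + 1) w w = 1.

Definition rel_open (N : nat) (S U : pset) : Prop :=
  (forall x, U x -> S x) /\
  forall a, U a -> exists eps, eps > 0 /\
    forall b, S b -> dot N (vsub a b) (vsub a b) < eps -> U b.

Definition connected (N : nat) (C : pset) : Prop :=
  forall U V : pset, rel_open N C U -> rel_open N C V ->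
    (forall x, C x -> U x \/ V x) -> (forall x, ~ (U x /\ V x)) ->
    (forall x, ~ U x) \/ (forall x, ~ V x).

Definition conn_component (N : nat) (S C : pset) : Prop :=
  (exists x, C x) /\ (forall x, C x -> S x) /\ connected N C /\
  forall D : pset, (forall x, C x -> D x) -> (forall x, D x -> S x) ->
    connected N D -> forall x, D x -> C x.

(* Minkowski patch: connected component of pi^{-1}(M_x), x = [v], v isotropic *)
Definition minkowski_patch (p q : nat) (M : pset) : Prop :=
  exists v : vecR, supp (p + q + 1) v /\ nonzero (p + q + 1) v /\ Bform p q v v = 0 /\
    conn_component (p + q + 1)
      (fun w => Ein_tilde p q w /\ Bform p q v w <> 0) M.

Definition at_most_two (I : Type) : Prop := forall i j k : I, i = j \/ i = k \/ j = k.

(* Main.v *)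
Require Import Defs.
From Stdlib Require Import Reals Lra Lia Psatz Classical FunctionalExtensionality.
Open Scope R_scope.


Definition Sm (m n : nat) (v w : vecR) : R :=
  sum_f_R0 (fun i => v (m+i)%nat * w (m+i)%nat) n.
Definition vadd (x y : vecR) : vecR := fun i => x i + y i.
Definition vscal (c : R) (x : vecR) : vecR := fun i => c * x i.

Lemma Sm_sym m n v w : Sm m n v w = Sm m n w v.
Proof. unfold Sm; apply sum_eq; intros; ring. Qed.

Lemma Sm_add_r m n v w1 w2 : Sm m n v (vadd w1 w2) = Sm m n v w1 + Sm m n v w2.
Proof. unfold Sm, vadd; induction n; simpl; [ring| rewrite IHn; ring]. Qed.

Lemma Sm_add_l m n v w1 w2 : Sm m n (vadd w1 w2) v = Sm m n w1 v + Sm m n w2 v.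
Proof. rewrite !(Sm_sym m n _ v); apply Sm_add_r. Qed.

Lemma Sm_scal_r m n v c w : Sm m n v (vscal c w) = c * Sm m n v w.
Proof. unfold Sm, vscal; induction n; simpl; [ring| rewrite IHn; ring]. Qed.

Lemma Sm_scal_l m n v c w : Sm m n (vscal c w) v = c * Sm m n w v.
Proof. rewrite !(Sm_sym m n _ v); apply Sm_scal_r. Qed.

Lemma Sm_nonneg m n v : 0 <= Sm m n v v.
Proof. unfold Sm; induction n; simpl; nra. Qed.

Lemma Sm_ext m n v w v' w' :
  (forall i, (i <= n)%nat -> v (m+i)%nat = v' (m+i)%nat /\ w (m+i)%nat = w' (m+i)%nat) ->
  Sm m n v w = Sm m n v' w'.
Proof. intros H; unfold Sm; apply sum_eq; intros i Hi; destruct (H i Hi) as [-> ->]; ring. Qed.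

Lemma CS m n u w : (Sm m n u w)^2 <= Sm m n u u * Sm m n w w.
Proof.
  assert (Hq : forall t, 0 <= Sm m n u u + 2*t*Sm m n u w + t*t*Sm m n w w).
  { intros t. pose proof (Sm_nonneg m n (vadd u (vscal t w))) as H.
    rewrite Sm_add_l, !Sm_add_r, !Sm_scal_l, !Sm_scal_r in H.
    rewrite (Sm_sym m n w u) in H. nra. }
  pose proof (Sm_nonneg m n u); pose proof (Sm_nonneg m n w).
  destruct (Rlt_dec 0 (Sm m n w w)) as [Hp|Hp].
  - specialize (Hq (- Sm m n u w / Sm m n w w)).
    assert (E: Sm m n u u + 2 * (- Sm m n u w / Sm m n w w) * Sm m n u w +
       (- Sm m n u w / Sm m n w w) * (- Sm m n u w / Sm m n w w) * Sm m n w w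
       = (Sm m n u u * Sm m n w w - (Sm m n u w)^2) / Sm m n w w) by (field; lra).
    rewrite E in Hq.
    apply Rmult_le_compat_r with (r := Sm m n w w) in Hq; [|lra].
    unfold Rdiv in Hq. rewrite Rmult_assoc, Rinv_l, Rmult_1_r in Hq by lra. lra.
  - assert (Sm m n w w = 0) by lra.
    destruct (Req_dec (Sm m n u w) 0) as [E|E].
    + rewrite E; nra.
    + specialize (Hq (-(Sm m n u u + 1)/(2*Sm m n u w))).
      rewrite H1 in Hq.
      assert (E2 : 2 * (- (Sm m n u u + 1) / (2 * Sm m n u w)) * Sm m n u w = -(Sm m n u u + 1))
        by (field; auto). lra.
Qed.

Lemma Sm_zero_orth m n u w : Sm m n u u = 0 -> Sm m n u w = 0.
Proof. intros H. pose proof (CS m n u w). rewrite H in H0. nra. Qed.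

Lemma Sm_pos_of m n u w : Sm m n u w <> 0 -> 0 < Sm m n w w.
Proof. intros H. pose proof (CS m n u w). pose proof (Sm_nonneg m n w).
  pose proof (Sm_nonneg m n u).
  destruct (Req_dec (Sm m n w w) 0); [|lra].
  exfalso; apply H. rewrite Sm_sym. now apply Sm_zero_orth. Qed.

Definition feas N (u0 ua ub : vecR) : Prop :=
  exists z, Sm 0 N u0 z > 0 /\ Sm 0 N ua z > 0 /\ Sm 0 N ub z > 0.

Lemma big_t (A B : R) : 0 < B -> exists t, 0 <= t /\ forall t', t <= t' -> A + t' * B > 0.
Proof. intros HB. exists ((Rabs A + 1)/B). split.
  - apply Rmult_le_pos; [pose proof (Rabs_pos A); lra | left; apply Rinv_0_lt_compat; lra].
  - intros t' Ht. assert (t' * B >= (Rabs A + 1)/B * B) by (apply Rmult_ge_compat_r; lra).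
    replace ((Rabs A + 1)/B*B) with (Rabs A + 1) in H by (field; lra).
    pose proof (Rle_abs (-A)). rewrite Rabs_Ropp in H0. lra.
Qed.

Lemma core N u0 u1 u2 u3 :
  (exists z, Sm 0 N u0 z > 0 /\ Sm 0 N u1 z > 0) ->
  (exists z, Sm 0 N u0 z > 0 /\ Sm 0 N u2 z > 0) ->
  (exists z, Sm 0 N u0 z > 0 /\ Sm 0 N u3 z > 0) ->
  feas N u0 u1 u2 \/ feas N u0 u1 u3 \/ feas N u0 u2 u3.
Proof.
  intros [z1 [H01 H11]] [z2 [H02 H22]] [z3 [H03 H33]].
  apply NNPP; intros Hn.
  assert (N12 : ~ feas N u0 u1 u2) by tauto.
  assert (N13 : ~ feas N u0 u1 u3) by tauto.
  assert (N23 : ~ feas N u0 u2 u3) by tauto.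
  clear Hn.
  set (a0 := Sm 0 N u0 u0).
  assert (Ha0 : 0 < a0) by (apply (Sm_pos_of 0 N z1); rewrite Sm_sym; lra).
  set (g := fun u => vadd (vscal a0 u) (vscal (- Sm 0 N u u0) u0)).
  assert (Hg0 : forall u w, Sm 0 N u0 w = 0 -> Sm 0 N (g u) w = a0 * Sm 0 N u w).
  { intros u w Hw. unfold g. rewrite Sm_add_l, !Sm_scal_l, Hw. ring. }
  assert (Hu0g : forall u, Sm 0 N u0 (g u) = 0).
  { intros u. unfold g. rewrite Sm_add_r, !Sm_scal_r. fold a0. rewrite (Sm_sym 0 N u0 u). ring. }
  assert (Hgz : forall u w, Sm 0 N (g u) w = a0 * Sm 0 N u w - Sm 0 N u u0 * Sm 0 N u0 w).
  { intros u w. unfold g. rewrite Sm_add_l, !Sm_scal_l. ring. }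
  assert (Hnd : forall ui uj zi zj, Sm 0 N u0 zi > 0 -> Sm 0 N ui zi > 0 ->
            Sm 0 N u0 zj > 0 -> Sm 0 N uj zj > 0 -> ~ feas N u0 ui uj ->
            0 < Sm 0 N (g ui) (g ui)).
  { intros ui uj zi zj A B C D F.
    destruct (Rlt_dec 0 (Sm 0 N (g ui) (g ui))) as [?|Hle]; [assumption|].
    assert (E : Sm 0 N (g ui) (g ui) = 0) by (pose proof (Sm_nonneg 0 N (g ui)); lra).
    exfalso.
    assert (Ez : forall w, a0 * Sm 0 N ui w = Sm 0 N ui u0 * Sm 0 N u0 w).
    { intros w. pose proof (Sm_zero_orth 0 N _ w E). rewrite Hgz in H. lra. }
    assert (Hc : Sm 0 N ui u0 > 0).
    { pose proof (Ez zi). destruct (Rlt_dec 0 (Sm 0 N ui u0)); [lra|]. nra. }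
    apply F. exists zj. repeat split; try lra.
    pose proof (Ez zj). nra. }
  assert (P1 : 0 < Sm 0 N (g u1) (g u1)) by exact (Hnd u1 u2 z1 z2 H01 H11 H02 H22 N12).
  assert (P2 : 0 < Sm 0 N (g u2) (g u2)).
  { apply (Hnd u2 u1 z2 z1 H02 H22 H01 H11). intros [z [A [B C]]]. apply N12. exists z; tauto. }
  assert (P3 : 0 < Sm 0 N (g u3) (g u3)).
  { apply (Hnd u3 u1 z3 z1 H03 H33 H01 H11). intros [z [A [B C]]]. apply N13. exists z; tauto. }
  assert (Hneg : forall ui uj zi, Sm 0 N u0 zi > 0 -> Sm 0 N ui zi > 0 ->
           0 < Sm 0 N (g ui) (g ui) -> 0 < Sm 0 N (g uj) (g uj) -> ~ feas N u0 ui uj ->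
           Sm 0 N (g ui) (g uj) < 0).
  { intros ui uj zi A B Pi Pj F. destruct (Rlt_dec (Sm 0 N (g ui) (g uj)) 0) as [?|Hge]; [assumption|].
    exfalso. set (e := vadd (g ui) (g uj)).
    assert (He0 : Sm 0 N u0 e = 0) by (unfold e; rewrite Sm_add_r, !Hu0g; ring).
    assert (Hie : a0 * Sm 0 N ui e = Sm 0 N (g ui) (g ui) + Sm 0 N (g ui) (g uj))
      by (rewrite <- Hg0 by exact He0; unfold e; rewrite Sm_add_r; ring).
    assert (Hje : a0 * Sm 0 N uj e = Sm 0 N (g ui) (g uj) + Sm 0 N (g uj) (g uj))
      by (rewrite <- Hg0 by exact He0; unfold e; rewrite Sm_add_r, (Sm_sym 0 N (g uj) (g ui)); ring).
    assert (Pie : 0 < Sm 0 N ui e) by nra.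
    assert (Pje : 0 < Sm 0 N uj e) by nra.
    destruct (big_t (Sm 0 N uj zi) (Sm 0 N uj e) Pje) as [t [Ht Ht']].
    apply F. exists (vadd zi (vscal t e)). rewrite !Sm_add_r, !Sm_scal_r, He0.
    specialize (Ht' t (Rle_refl _)). repeat split; nra. }
  assert (C12 := Hneg u1 u2 z1 H01 H11 P1 P2 N12).
  assert (C13 := Hneg u1 u3 z1 H01 H11 P1 P3 N13).
  apply N23. set (e := vscal (-1) (g u1)).
  assert (He0 : Sm 0 N u0 e = 0) by (unfold e; rewrite Sm_scal_r, Hu0g; ring).
  assert (H2e : a0 * Sm 0 N u2 e = - Sm 0 N (g u1) (g u2))
    by (rewrite <- Hg0 by exact He0; unfold e; rewrite Sm_scal_r, Sm_sym; ring).
  assert (H3e : a0 * Sm 0 N u3 e = - Sm 0 N (g u1) (g u3))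
    by (rewrite <- Hg0 by exact He0; unfold e; rewrite Sm_scal_r, Sm_sym; ring).
  assert (P2e : 0 < Sm 0 N u2 e) by nra.
  assert (P3e : 0 < Sm 0 N u3 e) by nra.
  destruct (big_t (Sm 0 N u3 z2) (Sm 0 N u3 e) P3e) as [t [Ht Ht']].
  exists (vadd z2 (vscal t e)). rewrite !Sm_add_r, !Sm_scal_r, He0.
  specialize (Ht' t (Rle_refl _)). repeat split; nra.
Qed.

Definition trunc (N : nat) (z : vecR) : vecR := fun i => if (i <=? N)%nat then z i else 0.

Lemma trunc_supp N z : supp N (trunc N z).
Proof. intros i Hi. unfold trunc. destruct (Nat.leb_spec i N); [lia|reflexivity]. Qed.

Lemma Sm_trunc_r N u z : Sm 0 N u (trunc N z) = Sm 0 N u z.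
Proof. apply Sm_ext. intros i Hi. split; [reflexivity|]. unfold trunc.
  simpl. destruct (Nat.leb_spec i N); [reflexivity|lia]. Qed.

Lemma supp_vscal N c z : supp N z -> supp N (vscal c z).
Proof. intros H i Hi; unfold vscal; rewrite H by lia; ring. Qed.
Lemma supp_vadd N x y : supp N x -> supp N y -> supp N (vadd x y).
Proof. intros H1 H2 i Hi; unfold vadd; rewrite H1, H2 by lia; ring. Qed.

Lemma normalize N u z : Sm 0 N u z <> 0 ->
  exists c, 0 < c /\ supp N (vscal c (trunc N z)) /\
    Sm 0 N (vscal c (trunc N z)) (vscal c (trunc N z)) = 1 /\
    forall v, Sm 0 N v (vscal c (trunc N z)) = c * Sm 0 N v z.
Proof.
  intros H. set (z' := trunc N z).
  assert (Hp : 0 < Sm 0 N z' z').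
  { apply (Sm_pos_of 0 N u). unfold z'. rewrite Sm_trunc_r. exact H. }
  exists (/ sqrt (Sm 0 N z' z')).
  pose proof (sqrt_lt_R0 _ Hp) as Hs.
  split; [apply Rinv_0_lt_compat; lra|]. split; [apply supp_vscal, trunc_supp|]. split.
  - rewrite Sm_scal_l, Sm_scal_r. rewrite <- Rmult_assoc.
    rewrite <- Rinv_mult. rewrite sqrt_sqrt by lra. field. lra.
  - intros v. rewrite Sm_scal_r. unfold z'. rewrite (Sm_trunc_r N v z). reflexivity.
Qed.

Lemma hemi_char n H : hemisphere n H ->
  exists u, forall x, H x <-> (supp n x /\ Sm 0 n x x = 1 /\ Sm 0 n u x > 0).
Proof. intros [lv [_ [_ Hx]]]. exists lv. intros x. rewrite Hx. unfold sphere, dot. tauto. Qed.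

Lemma part1 : forall (n : nat) (H0 : pset) (I : Type) (H : I -> pset),
      hemisphere n H0 ->
      (forall i, hemisphere n (H i)) ->
      (forall i, exists x, H0 x /\ H i x) ->
      (forall i j, i <> j -> forall x, ~ (H0 x /\ H i x /\ H j x)) ->
      at_most_two I.
Proof.
  intros n H0 I H h0 hi ne dis i j k.
  apply NNPP; intros Hn.
  assert (Dij : i <> j) by tauto. assert (Dik : i <> k) by tauto. assert (Djk : j <> k) by tauto.
  destruct (hemi_char n H0 h0) as [u0 E0].
  destruct (hemi_char n (H i) (hi i)) as [ui Ei].
  destruct (hemi_char n (H j) (hi j)) as [uj Ej].
  destruct (hemi_char n (H k) (hi k)) as [uk Ek].
  assert (F : forall a b ua ub, a <> b -> (forall x, H a x <-> (supp n x /\ Sm 0 n x x = 1 /\ Sm 0 n ua x > 0)) ->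
     (forall x, H b x <-> (supp n x /\ Sm 0 n x x = 1 /\ Sm 0 n ub x > 0)) -> ~ feas n u0 ua ub).
  { intros a b ua ub Dab Ea Eb [z [A [B C]]].
    destruct (normalize n u0 z ltac:(lra)) as [c [Hc [Hsu [Hn1 Hv]]]].
    apply (dis a b Dab (vscal c (trunc n z))).
    rewrite E0, Ea, Eb, (Hv u0), (Hv ua), (Hv ub). repeat split; try assumption; apply Rmult_gt_0_compat; lra. }
  assert (G : forall a ua, (forall x, H a x <-> (supp n x /\ Sm 0 n x x = 1 /\ Sm 0 n ua x > 0)) ->
     exists z, Sm 0 n u0 z > 0 /\ Sm 0 n ua z > 0).
  { intros a ua Ea. destruct (ne a) as [x [X1 X2]]. apply E0 in X1. apply Ea in X2.
    exists x; tauto. }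
  destruct (core n u0 ui uj uk (G i ui Ei) (G j uj Ej) (G k uk Ek)) as [X|[X|X]].
  - exact (F i j ui uj Dij Ei Ej X).
  - exact (F i k ui uk Dik Ei Ek X).
  - exact (F j k uj uk Djk Ej Ek X).
Qed.

Lemma sq3_zero x y z : ~ 0 < x*x+y*y+z*z -> x = 0 /\ y = 0 /\ z = 0.
Proof. intros H. assert (x*x = 0 /\ y*y = 0 /\ z*z = 0) as [A [B C]] by (repeat split; nra).
  repeat split; [apply (Rmult_integral x x) in A|apply (Rmult_integral y y) in B|apply (Rmult_integral z z) in C]; tauto. Qed.

Lemma three_dir (a b c d e f g h i : R) : exists x y z, 0 < x*x + y*y + z*z /\
  0 <= a*x + b*y + c*z /\ 0 <= d*x + e*y + f*z /\ 0 <= g*x + h*y + i*z.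
Proof.
  destruct (Rlt_dec 0 ((b*f - c*e)*(b*f - c*e)+(c*d - a*f)*(c*d - a*f)+(a*e - b*d)*(a*e - b*d))) as [HX|HX].
  { assert (E1 : a*(b*f - c*e) + b*(c*d - a*f) + c*(a*e - b*d) = 0) by ring.
    assert (E2 : d*(b*f - c*e) + e*(c*d - a*f) + f*(a*e - b*d) = 0) by ring.
    destruct (Rle_dec 0 (g*(b*f - c*e) + h*(c*d - a*f) + i*(a*e - b*d))).
    - exists (b*f - c*e), (c*d - a*f), (a*e - b*d). repeat split; lra.
    - exists (-(b*f - c*e)), (-(c*d - a*f)), (-(a*e - b*d)). repeat split; nra. }
  destruct (sq3_zero _ _ _ HX) as [E1 [E2 E3]].
  clear HX.
  destruct (Rlt_dec 0 ((b*i - c*h)*(b*i - c*h)+(c*g - a*i)*(c*g - a*i)+(a*h - b*g)*(a*h - b*g))) as [HY|HY].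
  { exists (b*i - c*h), (c*g - a*i), (a*h - b*g). split; [exact HY|].
    assert (d*(b*i - c*h) + e*(c*g - a*i) + f*(a*h - b*g) = -(g*(b*f - c*e) + h*(c*d - a*f) + i*(a*e - b*d))) by ring.
    rewrite E1, E2, E3 in H.
    assert (a*(b*i - c*h) + b*(c*g - a*i) + c*(a*h - b*g) = 0) by ring.
    assert (g*(b*i - c*h) + h*(c*g - a*i) + i*(a*h - b*g) = 0) by ring.
    repeat split; lra. }
  destruct (sq3_zero _ _ _ HY) as [F1 [F2 F3]].
  clear HY.
  destruct (Rlt_dec 0 ((e*i - f*h)*(e*i - f*h)+(f*g - d*i)*(f*g - d*i)+(d*h - e*g)*(d*h - e*g))) as [HZ|HZ].
  { exists (e*i - f*h), (f*g - d*i), (d*h - e*g). split; [exact HZ|].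
    assert (a*(e*i - f*h) + b*(f*g - d*i) + c*(d*h - e*g) = (g*(b*f - c*e) + h*(c*d - a*f) + i*(a*e - b*d))) by ring.
    rewrite E1, E2, E3 in H.
    assert (d*(e*i - f*h) + e*(f*g - d*i) + f*(d*h - e*g) = 0) by ring.
    assert (g*(e*i - f*h) + h*(f*g - d*i) + i*(d*h - e*g) = 0) by ring.
    repeat split; lra. }
  destruct (sq3_zero _ _ _ HZ) as [G1 [G2 G3]].
  clear HZ.
  assert (Hrow : forall (p1 p2 p3 : R),
     (p1 <> 0 \/ p2 <> 0 \/ p3 <> 0) ->
     (b*p3 - c*p2 = 0 /\ c*p1 - a*p3 = 0 /\ a*p2 - b*p1 = 0) ->
     (e*p3 - f*p2 = 0 /\ f*p1 - d*p3 = 0 /\ d*p2 - e*p1 = 0) ->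
     (h*p3 - i*p2 = 0 /\ i*p1 - g*p3 = 0 /\ g*p2 - h*p1 = 0) ->
     exists x y z, 0 < x*x + y*y + z*z /\
       0 <= a*x + b*y + c*z /\ 0 <= d*x + e*y + f*z /\ 0 <= g*x + h*y + i*z).
  { intros p1 p2 p3 Hp [A1 [A2 A3]] [B1 [B2 B3]] [C1 [C2 C3]].
    destruct (Rlt_dec 0 (p2*p2+p3*p3)).
    - exists 0, p3, (-p2). split; [lra|].
      repeat split; lra.
    - assert (p2 = 0 /\ p3 = 0) as [Q2 Q3] by (destruct (sq3_zero p2 p3 0 ltac:(lra)); tauto). subst p2 p3.
      assert (p1 <> 0) by tauto.
      exists 0, 0, 1. split; [lra|].
      assert (c = 0) by (apply (Rmult_eq_reg_l p1); lra).
      assert (f = 0) by (apply (Rmult_eq_reg_l p1); lra).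
      assert (i = 0) by (apply (Rmult_eq_reg_l p1); lra).
      subst. repeat split; lra. }
  destruct (classic (a <> 0 \/ b <> 0 \/ c <> 0)) as [HA|HA].
  { apply (Hrow a b c HA); repeat split; lra. }
  assert (a = 0 /\ b = 0 /\ c = 0) as [-> [-> ->]] by (repeat split; apply NNPP; tauto).
  destruct (classic (d <> 0 \/ e <> 0 \/ f <> 0)) as [HB|HB].
  { apply (Hrow d e f HB); repeat split; lra. }
  assert (d = 0 /\ e = 0 /\ f = 0) as [-> [-> ->]] by (repeat split; apply NNPP; tauto).
  destruct (classic (g <> 0 \/ h <> 0 \/ i <> 0)) as [HC|HC].
  { apply (Hrow g h i HC); repeat split; lra. }
  assert (g = 0 /\ h = 0 /\ i = 0) as [-> [-> ->]] by (repeat split; apply NNPP; tauto).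
  exists 1, 0, 0. repeat split; lra.
Qed.

Lemma sum_zero f n : (forall i, (i <= n)%nat -> f i = 0) -> sum_f_R0 f n = 0.
Proof. intros H; induction n; simpl. - apply H; lia. - rewrite IHn by (intros; apply H; lia). rewrite H; lia || ring. Qed.

Lemma sum3 f n : (2 <= n)%nat -> (forall i, (3 <= i)%nat -> f i = 0) ->
  sum_f_R0 f n = f 0%nat + f 1%nat + f 2%nat.
Proof. intros Hn H. induction n as [|n IH]; [lia|].
  destruct (Nat.eq_dec n 1) as [->|Hn1]; [simpl; ring|].
  simpl. rewrite IH by lia. rewrite (H (S n)) by lia. ring. Qed.

Lemma Sm_split p q v w : Sm 0 (p+q+1) v w = Sm 0 p v w + Sm (S p) q v w.
Proof. induction q.
  - replace (p+0+1)%nat with (S p) by lia. unfold Sm. simpl. replace (p+0)%nat with p by lia. ring.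
  - replace (p + S q + 1)%nat with (S (p+q+1)) by lia. unfold Sm in *. simpl in *. rewrite IHq.
    replace (S (p + q + 1)) with (S (p + S q)) by lia. ring.
Qed.

Lemma Bform_Sm p q v w : Bform p q v w = Sm 0 p v w - Sm (S p) q v w.
Proof. reflexivity. Qed.

Definition J (p : nat) (v : vecR) : vecR := fun i => if (i <=? p)%nat then v i else - v i.

Lemma BJ p q v w : Bform p q v w = Sm 0 (p+q+1) (J p v) w.
Proof. rewrite Sm_split, Bform_Sm.
  rewrite (Sm_ext 0 p (J p v) w v w).
  2:{ intros i Hi; unfold J; simpl; destruct (Nat.leb_spec i p); [auto|lia]. }
  assert (Sm (S p) q (J p v) w = - Sm (S p) q v w).
  { rewrite (Sm_ext (S p) q (J p v) w (vscal (-1) v) w).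
    - rewrite Sm_scal_l; ring.
    - intros i Hi. unfold J, vscal. destruct (Nat.leb_spec (S p + i) p); [lia|split; ring]. }
  lra.
Qed.

Lemma trunc_id N w : supp N w -> trunc N w = w.
Proof. intros H; apply functional_extensionality; intros i; unfold trunc.
  destruct (Nat.leb_spec i N); [reflexivity| rewrite H; [reflexivity|lia]]. Qed.

Lemma quad A B C : 0 < A -> C <= 0 -> exists t, 0 <= t /\ A*t*t + 2*B*t + C = 0.
Proof. intros HA HC.
  assert (Hd : 0 <= B*B - A*C) by nra.
  pose proof (sqrt_pos (B*B - A*C)) as Hs. pose proof (sqrt_sqrt _ Hd) as Hss.
  exists ((-B + sqrt (B*B - A*C))/A). split.
  - apply Rmult_le_pos; [|left; apply Rinv_0_lt_compat; lra].
    assert (B <= sqrt (B*B - A*C)); [|lra].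
    destruct (Rle_dec B 0); [lra|]. apply Rsqr_incr_0_var; unfold Rsqr; nra.
  - field_simplify; [|lra].
    assert (E: A*C - B^2 + sqrt (B*B - A*C)^2 = 0) by lra. rewrite E. unfold Rdiv; ring.
Qed.

Lemma Bform_add_r p q v a b : Bform p q v (vadd a b) = Bform p q v a + Bform p q v b.
Proof. rewrite !Bform_Sm, !Sm_add_r; ring. Qed.
Lemma Bform_scal_r p q v c a : Bform p q v (vscal c a) = c * Bform p q v a.
Proof. rewrite !Bform_Sm, !Sm_scal_r; ring. Qed.

Lemma finish p q c0 c1 c2 w0 : supp (p+q+1) w0 ->
  Sm 0 p w0 w0 = Sm (S p) q w0 w0 ->
  Bform p q c0 w0 > 0 -> Bform p q c1 w0 > 0 -> Bform p q c2 w0 > 0 ->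
  exists w, Ein_tilde p q w /\ Bform p q c0 w > 0 /\ Bform p q c1 w > 0 /\ Bform p q c2 w > 0.
Proof.
  intros Hs Heq H0 H1 H2.
  destruct (normalize (p+q+1) (J p c0) w0) as [c [Hc [Hsu [Hn Hv]]]].
  { rewrite <- BJ; lra. }
  rewrite (trunc_id _ _ Hs) in *.
  exists (vscal c w0). split; [split; [exact Hsu| split]|].
  - rewrite Bform_Sm, !Sm_scal_l, !Sm_scal_r, Heq. ring.
  - exact Hn.
  - rewrite !Bform_scal_r. repeat split; apply Rmult_gt_0_compat; lra.
Qed.

Definition ex3 (x y z : R) : vecR := fun i => match i with O => x | S O => y | S (S O) => z | _ => 0 end.
Definition ey3 (p : nat) (x y z : R) : vecR := fun i => if (i <=? p)%nat then 0 else ex3 x y z (i - S p)%nat.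

Lemma Sm_ex3_x p c x y z : (2 <= p)%nat -> Sm 0 p c (ex3 x y z) = c 0%nat * x + c 1%nat * y + c 2%nat * z.
Proof. intros Hp. unfold Sm. rewrite sum3; [reflexivity|lia|].
  intros i Hi. simpl. destruct i as [|[|[|i]]]; [lia|lia|lia|simpl; ring]. Qed.
Lemma ex3_zero x y z k : (3 <= k)%nat -> ex3 x y z k = 0.
Proof. intros H; destruct k as [|[|[|k]]]; [lia|lia|lia|reflexivity]. Qed.
Lemma Sm_ex3_y p q c x y z : (2 <= p)%nat -> Sm (S p) q c (ex3 x y z) = 0.
Proof. intros Hp. unfold Sm. apply sum_zero. intros i _. rewrite ex3_zero by lia. ring. Qed.
Lemma Sm_ey3_x p c x y z : Sm 0 p c (ey3 p x y z) = 0.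
Proof. unfold Sm. apply sum_zero. intros i Hi. unfold ey3. simpl.
  destruct (Nat.leb_spec i p); [ring|lia]. Qed.
Lemma Sm_ey3_y p q c x y z : (2 <= q)%nat -> Sm (S p) q c (ey3 p x y z) =
   c (S p) * x + c (S p + 1)%nat * y + c (S p + 2)%nat * z.
Proof. intros Hq. unfold Sm.
  rewrite (sum_eq _ (fun i => c (S p + i)%nat * ex3 x y z i)).
  2:{ intros i _. unfold ey3. destruct (Nat.leb_spec (S p + i) p); [lia|].
      replace (S p + i - S p)%nat with i by lia. reflexivity. }
  rewrite sum3; [|lia|].
  - simpl. rewrite Nat.add_0_r. reflexivity.
  - intros i Hi. destruct i as [|[|[|i]]]; [lia|lia|lia|simpl; ring].
Qed.

Lemma supp_ex3 N x y z : (2 <= N)%nat -> supp N (ex3 x y z).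
Proof. intros H i Hi. destruct i as [|[|[|i]]]; [lia|lia|lia|reflexivity]. Qed.
Lemma supp_ey3 p q x y z : (2 <= q)%nat -> supp (p+q+1) (ey3 p x y z).
Proof. intros H i Hi. unfold ey3. destruct (Nat.leb_spec i p); [reflexivity|].
  remember (i - S p)%nat as k. destruct k as [|[|[|k]]]; [lia|lia|lia|reflexivity]. Qed.

Lemma reduce p q c0 c1 c2 z : (2 <= p)%nat -> (2 <= q)%nat ->
  Bform p q c0 z > 0 -> Bform p q c1 z > 0 -> Bform p q c2 z > 0 ->
  exists w, Ein_tilde p q w /\ Bform p q c0 w > 0 /\ Bform p q c1 w > 0 /\ Bform p q c2 w > 0.
Proof.
  intros Hp Hq H0 H1 H2.
  set (N := (p+q+1)%nat).
  set (z' := trunc N z).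
  assert (Ht : forall c, Bform p q c z' = Bform p q c z).
  { intros c. rewrite !BJ. apply Sm_trunc_r. }
  assert (Hsz : supp N z') by apply trunc_supp.
  rewrite <- Ht in H0, H1, H2. clearbody z'. clear Ht z.
  assert (Step : forall d t, supp N d -> 0 <= t ->
      Bform p q c0 d >= 0 -> Bform p q c1 d >= 0 -> Bform p q c2 d >= 0 ->
      Sm 0 p (vadd z' (vscal t d)) (vadd z' (vscal t d)) = Sm (S p) q (vadd z' (vscal t d)) (vadd z' (vscal t d)) ->
      exists w, Ein_tilde p q w /\ Bform p q c0 w > 0 /\ Bform p q c1 w > 0 /\ Bform p q c2 w > 0).
  { intros d t Hd Ht D0 D1 D2 E. apply finish with (w0 := vadd z' (vscal t d)).
    - apply supp_vadd; [exact Hsz| apply supp_vscal; exact Hd].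
    - exact E.
    - rewrite Bform_add_r, Bform_scal_r; nra.
    - rewrite Bform_add_r, Bform_scal_r; nra.
    - rewrite Bform_add_r, Bform_scal_r; nra. }
  assert (Exp : forall m n d t, Sm m n (vadd z' (vscal t d)) (vadd z' (vscal t d)) =
     Sm m n z' z' + 2 * Sm m n z' d * t + Sm m n d d * t * t).
  { intros. rewrite Sm_add_l, !Sm_add_r, !Sm_scal_l, !Sm_scal_r, (Sm_sym m n d z'). ring. }
  destruct (Rtotal_order (Sm 0 p z' z') (Sm (S p) q z' z')) as [Hlt|[Heq|Hgt]].
  - destruct (three_dir (c0 0%nat) (c0 1%nat) (c0 2%nat) (c1 0%nat) (c1 1%nat) (c1 2%nat)
        (c2 0%nat) (c2 1%nat) (c2 2%nat)) as [x [y [zz [Hnz [R0 [R1 R2]]]]]].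
    set (d := ex3 x y zz).
    assert (Hdd : Sm 0 p d d = x*x + y*y + zz*zz) by (unfold d; rewrite Sm_ex3_x by lia; reflexivity).
    destruct (quad (Sm 0 p d d) (Sm 0 p z' d) (Sm 0 p z' z' - Sm (S p) q z' z')) as [t [Ht Et]]; [lra|lra|].
    apply (Step d t).
    + apply supp_ex3; unfold N; lia.
    + exact Ht.
    + rewrite Bform_Sm; unfold d; rewrite Sm_ex3_x, Sm_ex3_y by lia; lra.
    + rewrite Bform_Sm; unfold d; rewrite Sm_ex3_x, Sm_ex3_y by lia; lra.
    + rewrite Bform_Sm; unfold d; rewrite Sm_ex3_x, Sm_ex3_y by lia; lra.
    + assert (Y1 : Sm (S p) q z' d = 0) by (apply Sm_ex3_y; lia).
      assert (Y2 : Sm (S p) q d d = 0) by (apply Sm_ex3_y; lia).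
      rewrite !Exp, Y1, Y2. lra.
  - apply (Step (fun _ => 0) 0).
    + intros i _; reflexivity.
    + lra.
    + rewrite Bform_Sm; unfold Sm; rewrite !sum_zero by (intros; ring); lra.
    + rewrite Bform_Sm; unfold Sm; rewrite !sum_zero by (intros; ring); lra.
    + rewrite Bform_Sm; unfold Sm; rewrite !sum_zero by (intros; ring); lra.
    + rewrite !Exp. lra.
  - destruct (three_dir (- c0 (S p)) (- c0 (S p + 1)%nat) (- c0 (S p + 2)%nat)
        (- c1 (S p)) (- c1 (S p + 1)%nat) (- c1 (S p + 2)%nat)
        (- c2 (S p)) (- c2 (S p + 1)%nat) (- c2 (S p + 2)%nat)) as [x [y [zz [Hnz [R0 [R1 R2]]]]]].
    set (d := ey3 p x y zz).
    assert (Hdd : Sm (S p) q d d = x*x + y*y + zz*zz).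
    { unfold d. rewrite Sm_ey3_y by lia. unfold ey3.
      destruct (Nat.leb_spec (S p) p); [lia|]. destruct (Nat.leb_spec (S p + 1) p); [lia|].
      destruct (Nat.leb_spec (S p + 2) p); [lia|].
      replace (S p - S p)%nat with 0%nat by lia. replace (S p + 1 - S p)%nat with 1%nat by lia.
      replace (S p + 2 - S p)%nat with 2%nat by lia. simpl; ring. }
    destruct (quad (Sm (S p) q d d) (Sm (S p) q z' d) (Sm (S p) q z' z' - Sm 0 p z' z')) as [t [Ht Et]]; [lra|lra|].
    apply (Step d t).
    + apply supp_ey3; lia.
    + exact Ht.
    + rewrite Bform_Sm; unfold d; rewrite Sm_ey3_x, Sm_ey3_y by lia; lra.
    + rewrite Bform_Sm; unfold d; rewrite Sm_ey3_x, Sm_ey3_y by lia; lra.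
    + rewrite Bform_Sm; unfold d; rewrite Sm_ey3_x, Sm_ey3_y by lia; lra.
    + assert (Y1 : Sm 0 p z' d = 0) by (apply Sm_ey3_x).
      assert (Y2 : Sm 0 p d d = 0) by (apply Sm_ey3_x).
      rewrite !Exp, Y1, Y2. lra.
Qed.

Lemma vsub_eq a b : vsub a b = vadd a (vscal (-1) b).
Proof. apply functional_extensionality; intros i; unfold vsub, vadd, vscal; ring. Qed.

Lemma rel_open_sign N (C : pset) u :
  rel_open N C (fun x => C x /\ Sm 0 N u x > 0).
Proof.
  split; [tauto|]. intros a [Ca Ha].
  set (beta := Sm 0 N u a). change (beta > 0) in Ha.
  pose proof (Sm_nonneg 0 N u) as Hu.
  exists (beta*beta/(Sm 0 N u u + 1)). split.
  - apply Rdiv_lt_0_compat; [apply Rmult_lt_0_compat; lra| lra].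
  - intros b Cb Hd. split; [exact Cb|].
    change (Sm 0 N (vsub a b) (vsub a b) < beta * beta / (Sm 0 N u u + 1)) in Hd. rewrite vsub_eq in Hd.
    pose proof (CS 0 N u (vadd a (vscal (-1) b))) as Hcs.
    rewrite Sm_add_r, Sm_scal_r in Hcs. fold beta in Hcs.
    pose proof (Sm_nonneg 0 N (vadd a (vscal (-1) b))) as Hn.
    assert (Sm 0 N u u * Sm 0 N (vadd a (vscal (-1) b)) (vadd a (vscal (-1) b)) < beta*beta).
    { apply Rle_lt_trans with (Sm 0 N u u * (beta*beta/(Sm 0 N u u + 1))).
      - apply Rmult_le_compat_l; lra.
      - unfold Rdiv. rewrite <- Rmult_assoc.
        apply Rmult_lt_reg_r with (Sm 0 N u u + 1); [lra|].
        rewrite Rmult_assoc, Rinv_l by lra. nra. }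
    nra.
Qed.

Lemma path_side N (C U V : pset) (g : R -> vecR) :
  rel_open N C U -> rel_open N C V -> (forall x, C x -> U x \/ V x) -> (forall x, ~ (U x /\ V x)) ->
  (forall t, 0 <= t <= 1 -> C (g t)) ->
  (forall t, 0 <= t <= 1 -> forall eps, eps > 0 -> exists del, del > 0 /\
      forall s, 0 <= s <= 1 -> Rabs (s - t) < del -> dot N (vsub (g t) (g s)) (vsub (g t) (g s)) < eps) ->
  U (g 0) -> U (g 1).
Proof.
  intros [_ HU] [_ HV] Hcov Hdis HC Hcont H0.
  set (E := fun t => 0 <= t <= 1 /\ forall s, 0 <= s <= t -> U (g s)).
  assert (Hb : bound E) by (exists 1; intros t [Ht _]; lra).
  assert (He : exists x, E x).
  { exists 0. split; [lra|]. intros s Hs. replace s with 0 by lra. exact H0. }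
  destruct (completeness E Hb He) as [tau [Hub Hlub]].
  assert (Ht0 : 0 <= tau) by (apply Hub; destruct He; unfold E; split; [lra|]; intros s Hs; replace s with 0 by lra; exact H0).
  assert (Ht1 : tau <= 1) by (apply Hlub; intros t [Ht _]; lra).
  assert (Below : forall s, 0 <= s < tau -> U (g s)).
  { intros s Hs. apply NNPP; intros Hn.
    assert (is_upper_bound E s).
    { intros t [Ht Hall]. destruct (Rle_dec t s) as [?|Hts]; [assumption|].
      exfalso; apply Hn; apply Hall; lra. }
    specialize (Hlub s H). lra. }
  destruct (Hcov (g tau) (HC tau (conj Ht0 Ht1))) as [Hu|Hv].
  - destruct (HU _ Hu) as [eps [Heps Heps']].
    destruct (Hcont tau (conj Ht0 Ht1) eps Heps) as [del [Hdel Hdel']].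
    assert (Near : forall s, 0 <= s <= 1 -> Rabs (s - tau) < del -> U (g s)).
    { intros s Hs Hd. apply Heps'; [apply HC; exact Hs| apply Hdel'; assumption]. }
    destruct (Rlt_dec tau 1) as [Hlt|Hge].
    + exfalso. set (t' := Rmin (tau + del/2) 1).
      assert (E t').
      { unfold t'. split; [unfold Rmin; destruct (Rle_dec (tau + del/2) 1); lra|].
        intros s Hs. destruct (Rlt_dec s tau); [apply Below; lra|].
        apply Near; [unfold Rmin in Hs; destruct (Rle_dec (tau + del/2) 1); lra|].
        unfold Rmin in Hs; destruct (Rle_dec (tau + del/2) 1); rewrite Rabs_right; lra. }
      specialize (Hub t' H). unfold t', Rmin in Hub; destruct (Rle_dec (tau + del/2) 1); lra.
    + replace 1 with tau by lra. exact Hu.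
  - exfalso. destruct (HV _ Hv) as [eps [Heps Heps']].
    destruct (Hcont tau (conj Ht0 Ht1) eps Heps) as [del [Hdel Hdel']].
    assert (Hpos : 0 < tau).
    { destruct (Rlt_dec 0 tau); [assumption|]. exfalso. replace tau with 0 in Hv by lra. apply (Hdis (g 0)); tauto. }
    set (s := Rmax 0 (tau - del/2)).
    assert (Hs : 0 <= s < tau) by (unfold s, Rmax; destruct (Rle_dec 0 (tau - del/2)); lra).
    apply (Hdis (g s)). split; [apply Below; exact Hs|].
    apply Heps'; [apply HC; lra|]. apply Hdel'; [lra|].
    unfold s, Rmax; destruct (Rle_dec 0 (tau - del/2)); rewrite Rabs_left1; lra.
Qed.

Definition gam (f1 f2 : R -> R) (P1 P2 F : vecR) (t : R) : vecR :=
  vadd (vadd (vscal (f1 t) P1) (vscal (f2 t) P2)) F.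

Lemma eps_delta f t0 : continuity_pt f t0 -> forall eta, eta > 0 -> exists del, del > 0 /\
  forall s, Rabs (s - t0) < del -> Rabs (f t0 - f s) < eta.
Proof.
  intros Hc eta Heta. destruct (Hc eta Heta) as [del [Hdel H]].
  exists del. split; [exact Hdel|]. intros s Hs.
  destruct (Req_dec s t0) as [->|Hne]; [rewrite Rminus_diag, Rabs_R0; lra|].
  rewrite Rabs_minus_sym. apply (H s). split; [split; [exact I| auto]| exact Hs].
Qed.

Lemma gam_cont N f1 f2 P1 P2 F t0 : continuity_pt f1 t0 -> continuity_pt f2 t0 ->
  forall eps, eps > 0 -> exists del, del > 0 /\
      forall s, Rabs (s - t0) < del ->
        dot N (vsub (gam f1 f2 P1 P2 F t0) (gam f1 f2 P1 P2 F s)) (vsub (gam f1 f2 P1 P2 F t0) (gam f1 f2 P1 P2 F s)) < eps.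
Proof.
  intros C1 C2 eps Heps.
  set (K := Sm 0 N P1 P1 + Sm 0 N P2 P2).
  pose proof (Sm_nonneg 0 N P1); pose proof (Sm_nonneg 0 N P2).
  assert (HK : 0 <= K) by (unfold K; lra).
  set (eta := Rmin 1 (eps / (2*K + 1))).
  assert (Heta : 0 < eta) by (unfold eta, Rmin; destruct (Rle_dec 1 (eps/(2*K+1))); [lra|apply Rdiv_lt_0_compat; lra]).
  assert (Heta1 : eta <= 1) by (unfold eta; apply Rmin_l).
  assert (Heta2 : eta * (2*K+1) <= eps).
  { unfold eta. apply Rle_trans with (eps/(2*K+1)*(2*K+1)); [apply Rmult_le_compat_r; [lra|apply Rmin_r]|].
    right; field; lra. }
  destruct (eps_delta f1 t0 C1 eta Heta) as [d1 [Hd1 Hd1']].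
  destruct (eps_delta f2 t0 C2 eta Heta) as [d2 [Hd2 Hd2']].
  exists (Rmin d1 d2). split; [unfold Rmin; destruct (Rle_dec d1 d2); lra|].
  intros s Hs.
  assert (A1 : Rabs (f1 t0 - f1 s) < eta) by (apply Hd1'; eapply Rlt_le_trans; [exact Hs| apply Rmin_l]).
  assert (A2 : Rabs (f2 t0 - f2 s) < eta) by (apply Hd2'; eapply Rlt_le_trans; [exact Hs| apply Rmin_r]).
  set (a := f1 t0 - f1 s). set (b := f2 t0 - f2 s).
  assert (Ev : vsub (gam f1 f2 P1 P2 F t0) (gam f1 f2 P1 P2 F s) = vadd (vscal a P1) (vscal b P2)).
  { apply functional_extensionality; intros i; unfold vsub, gam, vadd, vscal, a, b; ring. }
  rewrite Ev. change (Sm 0 N (vadd (vscal a P1) (vscal b P2)) (vadd (vscal a P1) (vscal b P2)) < eps).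
  rewrite Sm_add_l, !Sm_add_r, !Sm_scal_l, !Sm_scal_r.
  pose proof (Sm_nonneg 0 N (vadd (vscal a P1) (vscal (-b) P2))) as Hm.
  rewrite Sm_add_l, !Sm_add_r, !Sm_scal_l, !Sm_scal_r in Hm.
  rewrite (Sm_sym 0 N P2 P1) in *.
  change (Rabs a < eta) in A1. change (Rabs b < eta) in A2.
  assert (a*a <= eta).
  { pose proof (Rabs_pos a). assert (Rabs a * Rabs a = a*a) by (rewrite <- Rabs_mult; apply Rabs_right; nra). nra. }
  assert (b*b <= eta).
  { pose proof (Rabs_pos b). assert (Rabs b * Rabs b = b*b) by (rewrite <- Rabs_mult; apply Rabs_right; nra). nra. }
  assert (a*a*Sm 0 N P1 P1 <= eta * Sm 0 N P1 P1) by (apply Rmult_le_compat_r; lra).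
  assert (b*b*Sm 0 N P2 P2 <= eta * Sm 0 N P2 P2) by (apply Rmult_le_compat_r; lra).
  unfold K in Heta2. nra.
Qed.

Definition Hf p q (sg : vecR) : pset := fun w => Ein_tilde p q w /\ Bform p q sg w > 0.

Lemma D_pos s t : -1 < s -> s <= 1 -> 0 <= t <= 1 -> 0 < (1-t)*(1-t)+t*t+2*t*(1-t)*s.
Proof. intros H1 H2 [H3 H4].
  assert (E : (1-t)*(1-t)+t*t+2*t*(1-t)*s = (1-2*t)*(1-2*t) + 2*t*(1-t)*(1+s)) by ring.
  rewrite E. destruct (Rle_lt_or_eq_dec 0 t H3) as [Ht0|Ht0]; [|subst t; nra].
  destruct (Rle_lt_or_eq_dec t 1 H4) as [Ht1|Ht1]; [|subst t; nra].
  assert (0 < t*(1-t)) by (apply Rmult_lt_0_compat; lra).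
  assert (0 < t*(1-t)*(1+s)) by (apply Rmult_lt_0_compat; lra).
  pose proof (Rle_0_sqr (1-2*t)). unfold Rsqr in *. lra. Qed.

Lemma key_ineq s t : -1 < s -> s <= 1 -> 0 <= t <= 1 ->
  s <= ((1-t)*s + t) * / sqrt ((1-t)*(1-t)+t*t+2*t*(1-t)*s).
Proof. intros H1 H2 Ht.
  pose proof (D_pos s t H1 H2 Ht) as HD.
  set (D := (1-t)*(1-t)+t*t+2*t*(1-t)*s) in *.
  pose proof (sqrt_lt_R0 _ HD) as Hr. pose proof (sqrt_sqrt D (Rlt_le _ _ HD)) as Hrr.
  set (r := sqrt D) in *.
  assert (Hid : ((1-t)*s+t)*((1-t)*s+t) - s*s*D = t*(1-s*s)*(2*(1-t)*s + t)) by (unfold D; ring).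
  apply Rmult_le_reg_r with r; [exact Hr|]. rewrite Rmult_assoc, Rinv_l, Rmult_1_r by lra.
  assert (0 <= 1 - s*s) by nra.
  assert (Hsq : (s*r)*(s*r) = s*s*D) by (rewrite <- Hrr; ring).
  destruct (Rle_dec 0 s).
  - assert (0 <= (1-t)*s + t) by nra.
    assert (0 <= t*(1-s*s)*(2*(1-t)*s + t)) by (apply Rmult_le_pos; [apply Rmult_le_pos|]; nra).
    apply Rsqr_incr_0_var; [unfold Rsqr; lra| assumption].
  - destruct (Rle_dec 0 ((1-t)*s + t)); [nra|].
    assert (t*(1-s*s)*(2*(1-t)*s + t) <= 0).
    { assert (0 <= t*(1-s*s)) by nra. assert (2*(1-t)*s + t <= 0) by nra.
      rewrite <- (Ropp_involutive (2*(1-t)*s+t)), <- Ropp_mult_distr_r. apply Ropp_le_cancel; rewrite Ropp_involutive, Ropp_0. apply Rmult_le_pos; lra. }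
    assert (- ((1-t)*s + t) <= - (s*r)); [|lra].
    apply Rsqr_incr_0_var; [unfold Rsqr; lra| nra].
Qed.

Lemma cont_phi (c0 c1 : R) s t : -1 < s -> s <= 1 -> 0 <= t <= 1 ->
  continuity_pt (fun t => (c0 + c1*t) * / sqrt ((1-t)*(1-t)+t*t+2*t*(1-t)*s)) t.
Proof. intros H1 H2 Ht. pose proof (D_pos s t H1 H2 Ht) as H.
  set (D := fun t => (1-t)*(1-t)+t*t+2*t*(1-t)*s).
  assert (CD : continuity_pt D t) by (unfold D; reg).
  change (continuity_pt (mult_fct (fun t => c0 + c1*t) (inv_fct (comp sqrt D))) t).
  apply continuity_pt_mult; [reg|]. apply continuity_pt_inv.
  - apply continuity_pt_comp; [exact CD| apply continuity_pt_sqrt; unfold D; lra].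
  - unfold comp, D. apply Rgt_not_eq, sqrt_lt_R0. lra.
Qed.

Lemma Ein_of p q w : supp (p+q+1) w -> Sm 0 p w w = 1/2 -> Sm (S p) q w w = 1/2 -> Ein_tilde p q w.
Proof. intros H1 H2 H3. split; [exact H1|]. split.
  - rewrite Bform_Sm; lra.
  - change (Sm 0 (p+q+1) w w = 1). rewrite Sm_split; lra. Qed.

Lemma Ein_blocks p q w : Ein_tilde p q w -> Sm 0 p w w = 1/2 /\ Sm (S p) q w w = 1/2.
Proof. intros [_ [H1 H2]]. rewrite Bform_Sm in H1. change (Sm 0 (p+q+1) w w = 1) in H2.
  rewrite Sm_split in H2. lra. Qed.

Lemma step p q sg mb nb mo no P Q F lam :
  ((mb = 0 /\ nb = p /\ mo = S p /\ no = q) \/ (mb = S p /\ nb = q /\ mo = 0 /\ no = p))%nat ->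
  supp (p+q+1) P -> supp (p+q+1) Q -> supp (p+q+1) F ->
  (forall G, Sm mo no P G = 0) -> (forall G, Sm mo no Q G = 0) -> (forall G, Sm mb nb F G = 0) ->
  Sm mb nb P P = 1/2 -> Sm mb nb Q Q = 1/2 -> Sm mo no F F = 1/2 ->
  0 < lam -> Bform p q sg P = lam * Sm mb nb Q P -> Bform p q sg Q = lam * (1/2) ->
  Bform p q sg P + Bform p q sg F > 0 -> 2 * Sm mb nb P Q > -1 ->
  forall U V, rel_open (p+q+1) (Hf p q sg) U -> rel_open (p+q+1) (Hf p q sg) V ->
  (forall x, Hf p q sg x -> U x \/ V x) -> (forall x, ~ (U x /\ V x)) ->
  U (vadd P F) -> U (vadd Q F).
Proof.
  intros Hbl SP SQ SF ZP ZQ ZF NP NQ NF Hlam BP BQ Bpos Hs U V HU HV Hcov Hdis HUP.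
  set (s := 2 * Sm mb nb P Q) in *.
  assert (Hs1 : s <= 1).
  { pose proof (CS mb nb P Q). unfold s. rewrite NP, NQ in H. nra. }
  set (Df := fun t => (1-t)*(1-t)+t*t+2*t*(1-t)*s).
  set (f1 := fun t => (1 + (-1)*t) * / sqrt (Df t)).
  set (f2 := fun t => (0 + 1*t) * / sqrt (Df t)).
  set (g := gam f1 f2 P Q F).
  assert (G0 : g 0 = vadd P F).
  { apply functional_extensionality; intros i. unfold g, gam, f1, f2, Df, vadd, vscal.
    replace ((1-0)*(1-0)+0*0+2*0*(1-0)*s) with 1 by ring. rewrite sqrt_1. field. }
  assert (G1 : g 1 = vadd Q F).
  { apply functional_extensionality; intros i. unfold g, gam, f1, f2, Df, vadd, vscal.
    replace ((1-1)*(1-1)+1*1+2*1*(1-1)*s) with 1 by ring. rewrite sqrt_1. field. }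
  rewrite <- G1. rewrite <- G0 in HUP.
  apply (path_side (p+q+1) (Hf p q sg) U V g HU HV Hcov Hdis); [| |exact HUP].
  - intros t Ht. pose proof (D_pos s t Hs Hs1 Ht) as HD.
    pose proof (sqrt_lt_R0 _ HD) as Hr. pose proof (sqrt_sqrt _ (Rlt_le _ _ HD)) as Hrr.
    assert (Hg : g t = vadd (vadd (vscal (f1 t) P) (vscal (f2 t) Q)) F) by reflexivity.
    assert (Eb : Sm mb nb (g t) (g t) = 1/2).
    { rewrite Hg, !Sm_add_l, !Sm_add_r, !Sm_scal_l, !Sm_scal_r, !ZF.
      rewrite (Sm_sym mb nb P F), (Sm_sym mb nb Q F), !ZF, NP, NQ, (Sm_sym mb nb Q P).
      unfold f1, f2.
      assert (Hk : / sqrt (Df t) * / sqrt (Df t) * Df t = 1).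
      { rewrite <- Rinv_mult. change (Df t) with ((1-t)*(1-t)+t*t+2*t*(1-t)*s). rewrite Hrr. field. lra. }
      set (k := / sqrt (Df t)) in *. unfold Df in Hk. unfold s in Hk.
      transitivity (k * k * ((1 - t) * (1 - t) + t * t + 2 * t * (1 - t) * (2 * Sm mb nb P Q)) * (1/2)).
      { field. }
      rewrite Hk. field. }
    assert (Eo : Sm mo no (g t) (g t) = 1/2).
    { rewrite Hg, !Sm_add_l, !Sm_add_r, !Sm_scal_l, !Sm_scal_r, !ZP, !ZQ.
      rewrite (Sm_sym mo no F P), (Sm_sym mo no F Q), !ZP, !ZQ, NF. ring. }
    split.
    + apply Ein_of.
      * unfold g, gam. repeat apply supp_vadd; try apply supp_vscal; assumption.
      * destruct Hbl as [[-> [-> [-> ->]]]|[-> [-> [-> ->]]]]; assumption.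
      * destruct Hbl as [[-> [-> [-> ->]]]|[-> [-> [-> ->]]]]; assumption.
    + rewrite Hg, !Bform_add_r, !Bform_scal_r, BQ.
      assert (BP' : Bform p q sg P = lam * (s/2)).
      { rewrite BP, Sm_sym. unfold s; field. }
      rewrite BP'.
      pose proof (key_ineq s t Hs Hs1 Ht) as K.
      assert (E : f1 t * (lam * (s / 2)) + f2 t * (lam * (1 / 2)) =
                  lam / 2 * (((1-t)*s + t) * / sqrt (Df t))) by (unfold f1, f2; field; apply Rgt_not_eq; exact Hr).
      rewrite E. unfold Df. cbv beta. rewrite BP' in Bpos.
      set (X := ((1 - t) * s + t) * / sqrt ((1 - t) * (1 - t) + t * t + 2 * t * (1 - t) * s)) in *.
      assert (0 <= lam / 2 * (X - s)) by (apply Rmult_le_pos; lra).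
      lra.
  - intros t Ht eps Heps.
    destruct (gam_cont (p+q+1) f1 f2 P Q F t (cont_phi 1 (-1) s t Hs Hs1 Ht) (cont_phi 0 1 s t Hs Hs1 Ht) eps Heps)
      as [del [Hdel H]].
    exists del; split; [exact Hdel|]. intros s0 _ Hs0. exact (H s0 Hs0).
Qed.

Definition px (p : nat) (w : vecR) : vecR := fun i => if (i <=? p)%nat then w i else 0.
Definition py (p : nat) (w : vecR) : vecR := fun i => if (i <=? p)%nat then 0 else w i.

Lemma Sm_px_x p a G : Sm 0 p (px p a) G = Sm 0 p a G.
Proof. apply Sm_ext; intros i Hi; unfold px; simpl; destruct (Nat.leb_spec i p); [auto|lia]. Qed.
Lemma Sm_px_y p q a G : Sm (S p) q (px p a) G = 0.
Proof. unfold Sm; apply sum_zero; intros i Hi; unfold px; destruct (Nat.leb_spec (S p + i) p); [lia|ring]. Qed.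
Lemma Sm_py_x p a G : Sm 0 p (py p a) G = 0.
Proof. unfold Sm; apply sum_zero; intros i Hi; unfold py; simpl; destruct (Nat.leb_spec i p); [ring|lia]. Qed.
Lemma Sm_py_y p q a G : Sm (S p) q (py p a) G = Sm (S p) q a G.
Proof. apply Sm_ext; intros i Hi; unfold py; destruct (Nat.leb_spec (S p + i) p); [lia|auto]. Qed.
Lemma pxy p w : vadd (px p w) (py p w) = w.
Proof. apply functional_extensionality; intros i; unfold vadd, px, py; destruct (i <=? p)%nat; ring. Qed.
Lemma vadd_comm a b : vadd a b = vadd b a.
Proof. apply functional_extensionality; intros i; unfold vadd; ring. Qed.
Lemma supp_px N p w : supp N w -> supp N (px p w).
Proof. intros H i Hi; unfold px; destruct (i <=? p)%nat; [apply H; lia|reflexivity]. Qed.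
Lemma supp_py N p w : supp N w -> supp N (py p w).
Proof. intros H i Hi; unfold py; destruct (i <=? p)%nat; [reflexivity|apply H; lia]. Qed.

Lemma sum_ge_term f n i : (forall k, 0 <= f k) -> (i <= n)%nat -> f i <= sum_f_R0 f n.
Proof. intros H Hi. induction n.
  - replace i with 0%nat by lia. simpl; lra.
  - destruct (Nat.eq_dec i (S n)) as [->|Hne].
    + simpl. pose proof (cond_pos_sum f n H). lra.
    + simpl. pose proof (H (S n)). assert (f i <= sum_f_R0 f n) by (apply IHn; lia). lra. Qed.

Lemma Bform_scal_l p q c v w : Bform p q (vscal c v) w = c * Bform p q v w.
Proof. rewrite !Bform_Sm, !Sm_scal_l; ring. Qed.

Lemma half_conn p q sg : supp (p+q+1) sg -> Defs.nonzero (p+q+1) sg -> Bform p q sg sg = 0 ->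
  connected (p+q+1) (Hf p q sg).
Proof.
  intros Ss [i0 [Hi0 Hnz]] Iso.
  set (N := (p+q+1)%nat) in *.
  set (R0 := Sm 0 p sg sg).
  assert (Htot : 0 < Sm 0 N sg sg).
  { apply Rlt_le_trans with (sg i0 * sg i0).
    - assert (0 < sg i0 * sg i0) by (apply Rsqr_pos_lt; exact Hnz). lra.
    - unfold Sm. apply (sum_ge_term (fun i => sg (0+i)%nat * sg (0+i)%nat) N i0); [intros; simpl; nra| exact Hi0]. }
  unfold N in Htot. rewrite Sm_split in Htot. rewrite Bform_Sm in Iso.
  assert (HR : 0 < R0) by (unfold R0; lra).
  assert (HRy : Sm (S p) q sg sg = R0) by (unfold R0; lra).
  set (ka := / sqrt (2*R0)).
  assert (Hs2 : 0 < sqrt (2*R0)) by (apply sqrt_lt_R0; lra).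
  assert (Hka : 0 < ka) by (apply Rinv_0_lt_compat; exact Hs2).
  assert (Hka2 : ka * ka * (2*R0) = 1).
  { unfold ka. rewrite <- Rinv_mult, sqrt_sqrt by lra. field. lra. }
  set (a' := vscal ka (px p sg)). set (b' := vscal (-ka) (py p sg)). set (w0 := vadd a' b').
  assert (Claim : forall U V, rel_open N (Hf p q sg) U -> rel_open N (Hf p q sg) V ->
     (forall x, Hf p q sg x -> U x \/ V x) -> (forall x, ~ (U x /\ V x)) ->
     forall w, Hf p q sg w -> U w -> U w0).
  { intros U V HU HV Hcov Hdis w [Ew Bw] Uw.
    destruct (Ein_blocks p q w Ew) as [Xw Yw].
    assert (Sw : supp N w) by (destruct Ew; assumption).
    set (x := px p w). set (y := py p w).
    set (al := Sm 0 p sg w). set (be := Sm (S p) q sg w).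
    assert (Hab : al - be > 0) by (rewrite Bform_Sm in Bw; exact Bw).
    assert (Hal : al * al <= R0 * (1/2)) by (pose proof (CS 0 p sg w); unfold al, R0; rewrite <- Xw; nra).
    assert (Hbe : be * be <= R0 * (1/2)) by (pose proof (CS (S p) q sg w); unfold be; rewrite <- HRy, <- Yw; nra).
    assert (HkR : ka * R0 * (2 * ka) = 1) by lra.
    assert (Eal : al <= ka * R0).
    { destruct (Rle_dec al 0); [apply Rle_trans with 0; [lra| apply Rmult_le_pos; lra]|].
      apply Rsqr_incr_0_var; [unfold Rsqr| apply Rmult_le_pos; lra].
      replace (ka*R0*(ka*R0)) with (R0*(1/2) * (ka*ka*(2*R0))) by field. rewrite Hka2. lra. }
    assert (U1 : U (vadd a' y)).
    { rewrite <- (pxy p w) in Uw. fold x y in Uw.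
      apply (step p q sg 0 p (S p) q x a' y (/ ka)) with (V := V).
      - left; auto.
      - apply supp_px; exact Sw.
      - apply supp_vscal, supp_px; exact Ss.
      - apply supp_py; exact Sw.
      - intros G; apply Sm_px_y.
      - intros G; unfold a'; rewrite Sm_scal_l, Sm_px_y; ring.
      - intros G; apply Sm_py_x.
      - unfold x; rewrite Sm_px_x, Sm_sym, Sm_px_x; exact Xw.
      - unfold a'; rewrite Sm_scal_l, Sm_scal_r, Sm_px_x, Sm_sym, Sm_px_x. fold R0.
        replace (1/2) with (ka*ka*(2*R0)/2) by (rewrite Hka2; reflexivity). field.
      - unfold y; rewrite Sm_py_y, Sm_sym, Sm_py_y; exact Yw.
      - apply Rinv_0_lt_compat; exact Hka.
      - rewrite Bform_Sm. unfold a', x. rewrite Sm_scal_l, Sm_px_x, (Sm_sym (S p) q sg), Sm_px_y.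
        field. apply Rgt_not_eq; lra.
      - rewrite Bform_Sm. unfold a'. rewrite Sm_scal_r, Sm_scal_r, Sm_sym, Sm_px_x, (Sm_sym (S p) q sg), Sm_px_y.
        fold R0. apply (Rmult_eq_reg_r ka); [|lra]. field_simplify; lra.
      - rewrite !Bform_Sm. unfold x, y. rewrite (Sm_sym 0 p sg (px p w)), Sm_px_x, (Sm_sym (S p) q sg (px p w)), Sm_px_y.
        rewrite (Sm_sym 0 p sg (py p w)), Sm_py_x, (Sm_sym (S p) q sg (py p w)), Sm_py_y, !(Sm_sym _ _ w sg).
        fold al be. lra.
      - unfold x, a'. rewrite Sm_scal_r, Sm_px_x, Sm_sym, Sm_px_x. fold al.
        destruct (Rgt_dec (2 * (ka * al)) (-1)) as [?|Hn]; [lra|exfalso].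
        assert (al < 0) by nra.
        assert (4*(ka*ka)*(al*al) >= 1) by nra.
        assert (al*al >= R0 * (1/2)).
        { apply Rle_ge. apply Rmult_le_reg_l with (4*(ka*ka)); [nra|]. replace (4 * (ka * ka) * (R0 * (1 / 2))) with (ka*ka*(2*R0)) by field. lra. }
        assert (be < al) by lra. nra.
      - exact HU. - exact HV. - exact Hcov. - exact Hdis. - exact Uw. }
    rewrite vadd_comm in U1.
    unfold w0. rewrite vadd_comm.
    apply (step p q sg (S p) q 0 p y b' a' (/ ka)) with (V := V).
    - right; auto.
    - apply supp_py; exact Sw.
    - apply supp_vscal, supp_py; exact Ss.
    - apply supp_vscal, supp_px; exact Ss.
    - intros G; apply Sm_py_x.
    - intros G; unfold b'; rewrite Sm_scal_l, Sm_py_x; ring.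
    - intros G; unfold a'; rewrite Sm_scal_l, Sm_px_y; ring.
    - unfold y; rewrite Sm_py_y, Sm_sym, Sm_py_y; exact Yw.
    - unfold b'; rewrite Sm_scal_l, Sm_scal_r, Sm_py_y, Sm_sym, Sm_py_y, HRy.
      replace (1/2) with (ka*ka*(2*R0)/2) by (rewrite Hka2; reflexivity). field.
    - unfold a'; rewrite Sm_scal_l, Sm_scal_r, Sm_px_x, Sm_sym, Sm_px_x. fold R0.
      replace (1/2) with (ka*ka*(2*R0)/2) by (rewrite Hka2; reflexivity). field.
    - apply Rinv_0_lt_compat; exact Hka.
    - rewrite Bform_Sm. unfold b', y. rewrite Sm_scal_l, Sm_py_y, (Sm_sym 0 p sg), Sm_py_x.
      field. apply Rgt_not_eq; lra.
    - rewrite Bform_Sm. unfold b'. rewrite !Sm_scal_r, (Sm_sym 0 p sg), Sm_py_x, (Sm_sym (S p) q sg), Sm_py_y, HRy.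
      apply (Rmult_eq_reg_r ka); [|lra]. field_simplify; lra.
    - rewrite !Bform_Sm. unfold y, a'. rewrite (Sm_sym 0 p sg (py p w)), Sm_py_x, (Sm_sym (S p) q sg (py p w)), Sm_py_y.
      rewrite !Sm_scal_r, (Sm_sym 0 p sg (px p sg)), Sm_px_x, (Sm_sym (S p) q sg (px p sg)), Sm_px_y, (Sm_sym _ _ w sg).
      fold R0 be. lra.
    - unfold y, b'. rewrite Sm_scal_r, Sm_sym, Sm_py_y, Sm_sym, Sm_py_y, (Sm_sym (S p) q w sg). fold be.
      assert (be < ka * R0) by lra.
      assert (0 < ka * (ka * R0 - be)) by (apply Rmult_lt_0_compat; lra). nra.
    - exact HU. - exact HV. - exact Hcov. - exact Hdis. - exact U1. }
  intros U V HU HV Hcov Hdis.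
  destruct (classic (exists u, U u)) as [[u Uu]|Hn]; [|left; intros x Ux; apply Hn; exists x; exact Ux].
  right. intros v Vv.
  assert (Cu : Hf p q sg u) by (destruct HU as [HU _]; apply HU; exact Uu).
  assert (Cv : Hf p q sg v) by (destruct HV as [HV _]; apply HV; exact Vv).
  apply (Hdis w0). split.
  - exact (Claim U V HU HV Hcov Hdis u Cu Uu).
  - refine (Claim V U HV HU _ _ v Cv Vv).
    + intros x Cx; destruct (Hcov x Cx); tauto.
    + intros x [A B]; apply (Hdis x); tauto.
Qed.

Lemma patch_char p q M : minkowski_patch p q M ->
  exists sg, supp (p+q+1) sg /\ Defs.nonzero (p+q+1) sg /\ Bform p q sg sg = 0 /\
    forall w, M w <-> Hf p q sg w.
Proof.
  intros [v [Sv [Nv [Iv [[x0 Mx0] [MS [Mc Mmax]]]]]]].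
  set (N := (p+q+1)%nat) in *.
  set (U := fun w => M w /\ Sm 0 N (J p v) w > 0).
  set (V := fun w => M w /\ Sm 0 N (vscal (-1) (J p v)) w > 0).
  assert (Hcov : forall w, M w -> U w \/ V w).
  { intros w Mw. destruct (MS w Mw) as [_ Hb]. rewrite BJ in Hb. fold N in Hb.
    unfold U, V. rewrite Sm_scal_l.
    destruct (Rtotal_order (Sm 0 N (J p v) w) 0) as [?|[?|?]]; [right|tauto|left]; split; auto; lra. }
  assert (Hdis : forall w, ~ (U w /\ V w)).
  { intros w [[_ A] [_ B]]. rewrite Sm_scal_l in B. lra. }
  destruct (Mc U V (rel_open_sign N M _) (rel_open_sign N M _) Hcov Hdis) as [HnU|HnV].
  -
    exists (vscal (-1) v). split; [apply supp_vscal; exact Sv|]. split.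
    { destruct Nv as [i [Hi Hv]]. exists i. split; [exact Hi|]. unfold vscal. lra. }
    split; [rewrite Bform_scal_l, Bform_scal_r, Iv; ring|].
    assert (Sub : forall w, M w -> Hf p q (vscal (-1) v) w).
    { intros w Mw. destruct (Hcov w Mw) as [Uw|[_ Vw]]; [exfalso; exact (HnU w Uw)|].
      destruct (MS w Mw) as [Ew _]. split; [exact Ew|].
      rewrite Bform_scal_l, BJ. rewrite Sm_scal_l in Vw. exact Vw. }
    intros w; split; [apply Sub|].
    apply (Mmax (Hf p q (vscal (-1) v))); [exact Sub| |].
    + intros y [Ey By]. split; [exact Ey|]. rewrite Bform_scal_l in By. lra.
    + apply half_conn; [apply supp_vscal; exact Sv| |rewrite Bform_scal_l, Bform_scal_r, Iv; ring].
      destruct Nv as [i [Hi Hv]]. exists i. split; [exact Hi|]. unfold vscal. lra.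
  - exists v. split; [exact Sv|]. split; [exact Nv|]. split; [exact Iv|].
    assert (Sub : forall w, M w -> Hf p q v w).
    { intros w Mw. destruct (Hcov w Mw) as [[_ Uw]|Vw]; [|exfalso; exact (HnV w Vw)].
      destruct (MS w Mw) as [Ew _]. split; [exact Ew|]. rewrite BJ. exact Uw. }
    intros w; split; [apply Sub|].
    apply (Mmax (Hf p q v)); [exact Sub| |].
    + intros y [Ey By]. split; [exact Ey|]. lra.
    + apply half_conn; assumption.
Qed.

Lemma part2 : forall (p q : nat) (M0 : pset) (I : Type) (M : I -> pset),
      (2 <= p)%nat -> (2 <= q)%nat ->
      minkowski_patch p q M0 ->
      (forall i, minkowski_patch p q (M i)) ->
      (forall i, exists x, M0 x /\ M i x) ->
      (forall i j, i <> j -> forall x, ~ (M0 x /\ M i x /\ M j x)) ->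
      at_most_two I.
Proof.
  intros p q M0 I M Hp Hq h0 hi ne dis i j k.
  apply NNPP; intros Hn.
  assert (Dij : i <> j) by tauto. assert (Dik : i <> k) by tauto. assert (Djk : j <> k) by tauto.
  destruct (patch_char p q M0 h0) as [s0 [_ [_ [_ E0]]]].
  destruct (patch_char p q (M i) (hi i)) as [si [_ [_ [_ Ei]]]].
  destruct (patch_char p q (M j) (hi j)) as [sj [_ [_ [_ Ej]]]].
  destruct (patch_char p q (M k) (hi k)) as [sk [_ [_ [_ Ek]]]].
  set (N := (p+q+1)%nat).
  assert (F : forall a b sa sb, a <> b -> (forall x, M a x <-> Hf p q sa x) ->
     (forall x, M b x <-> Hf p q sb x) -> ~ feas N (J p s0) (J p sa) (J p sb)).
  { intros a b sa sb Dab Ea Eb [z [A [B C]]].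
    unfold N in A, B, C. rewrite <- BJ in A, B, C.
    destruct (reduce p q s0 sa sb z Hp Hq A B C) as [w [Ew [W0 [Wa Wb]]]].
    apply (dis a b Dab w). rewrite E0, Ea, Eb. unfold Hf. tauto. }
  assert (G : forall a sa, (forall x, M a x <-> Hf p q sa x) ->
     exists z, Sm 0 N (J p s0) z > 0 /\ Sm 0 N (J p sa) z > 0).
  { intros a sa Ea. destruct (ne a) as [x [X1 X2]]. apply E0 in X1. apply Ea in X2.
    exists x. unfold N. rewrite <- !BJ. destruct X1, X2. tauto. }
  destruct (core N (J p s0) (J p si) (J p sj) (J p sk) (G i si Ei) (G j sj Ej) (G k sk Ek)) as [X|[X|X]].
  - exact (F i j si sj Dij Ei Ej X).
  - exact (F i k si sk Dik Ei Ek X).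
  - exact (F j k sj sk Djk Ej Ek X).
Qed.

Theorem lemma3p7 :
  (forall (n : nat) (H0 : pset) (I : Type) (H : I -> pset),
      hemisphere n H0 ->
      (forall i, hemisphere n (H i)) ->
      (forall i, exists x, H0 x /\ H i x) ->
      (forall i j, i <> j -> forall x, ~ (H0 x /\ H i x /\ H j x)) ->
      at_most_two I)
  /\
  (forall (p q : nat) (M0 : pset) (I : Type) (M : I -> pset),
      (2 <= p)%nat -> (2 <= q)%nat ->
      minkowski_patch p q M0 ->
      (forall i, minkowski_patch p q (M i)) ->
      (forall i, exists x, M0 x /\ M i x) ->
      (forall i j, i <> j -> forall x, ~ (M0 x /\ M i x /\ M j x)) ->
      at_most_two I).
Proof. split; [exact part1 | exact part2]. Qed.
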